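(* Let $\mathcal{A},\mathcal{B},\mathcal{C}$ be finite-dimensional complex Hilbert spaces with $\dim\mathcal{C}\geq\dim(\mathcal{A}\otimes\mathcal{B})$, let $\ket{\mathrm{idle}}\in\mathcal{B}$ be a unit vector, and let $L$ be a subunitary operator on $\mathcal{A}\otimes\mathcal{B}$ with $L(\ket{\varphi}\otimes\ket{\mathrm{idle}})=\ket{\varphi}\otimes\ket{\mathrm{idle}}$ for all $\ket{\varphi}\in\mathcal{A}$. Let $\ket{\xi}\neq 0$ and $\ket{\tau}$ be vectors in $\mathcal{A}\otimes\mathcal{B}\otimes\mathcal{C}$. Let $\overline{\pi}$ be a positive semidefinite operator on $\mathcal{A}\otimes\mathcal{B}$ satisfying $$\mathrm{tr}_{\mathcal{B}}\left(L\overline{\pi}L^\dagger-\overline{\pi}\right)=\mathrm{tr}_{\mathcal{B}\mathcal{C}}\left(\ket{\tau}\bra{\tau}-\ket{\xi}\bra{\xi}\right),$$ and let $\ket{v}\in\mathcal{A}\otimes\mathcal{B}\otimes\mathcal{C}$ be a purification of $\overline{\pi}$, i.e. $\mathrm{tr}_{\mathcal{C}}\ket{v}\bra{v}=\overline{\pi}$. Then for every integer $T'>0$, the operators $$\pi^j=\left(\frac{T'-j}{T'}\,\mathrm{tr}_{\mathcal{B}\mathcal{C}}\ket{\xi}\bra{\xi}+\frac{j}{T'}\,\mathrm{tr}_{\mathcal{B}\mathcal{C}}\ket{\tau}\bra{\tau}\right)\otimes\ket{\mathrm{idle}}\bra{\mathrm{idle}}+\frac{\overline{\pi}}{T'},\qquad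 0\leq j<T',$$ are positive semidefinite and satisfy $\mathrm{tr}_{\mathcal{B}}\pi^{j+1}=\mathrm{tr}_{\mathcal{B}}(L\pi^jL^\dagger)$ for $0\leq j\leq T'-2$, and they constitute a $T'$-timestep algorithm (with ancilla space $\mathcal{C}\otimes\mathbb{C}^2$, i.e. an added qubit) transforming $$\ket{\xi}\otimes\ket{0}+\frac{\ket{v}}{\sqrt{T'}}\otimes\ket{1}\ \mapsto\ \ket{\tau}\otimes\ket{0}+\frac{\ket{v}}{\sqrt{T'}}\otimes\ket{1}.$$
   Context: A $T$-timestep algorithm with ancilla space $\mathcal{C}'$ consists of unitaries $U_0,\dots,U_T$ on $\mathcal{B}\otimes\mathcal{C}'$ and applies $E=(I_{\mathcal{A}}\otimes U_T)(L\otimes I_{\mathcal{C}'})(I_{\mathcal{A}}\otimes U_{T-1})\cdots(L\otimes I_{\mathcal{C}'})(I_{\mathcal{A}}\otimes U_0)$ to a state in $\mathcal{A}\otimes\mathcal{B}\otimes\mathcal{C}'$; it transforms $\ket{x}\mapsto\ket{y}$ if $E\ket{x}=\ket{y}$. Its intermediate states are $\ket{\Phi^j}=(I_{\mathcal{A}}\otimes U_j)(L\otimes I)\cdots(L\otimes I)(I_{\mathcal{A}}\otimes U_0)\ket{x}$ ($j$ applications of $L$), and ''the sequence $(\pi^j)$ constitutes the algorithm'' means $\pi^j=\mathrm{tr}_{\mathcal{C}'}\ket{\Phi^j}\bra{\Phi^j}$. Subunitary means $\|L\ket{\varphi}\|\leq\|\ket{\varphi}\|$ for all $\ket{\varphi}$.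 States need not be normalized; $\mathrm{tr}_{\mathcal{B}}$ etc. are partial traces. *)

(* Defs.v *)
(* A finite-dimensional
   Hilbert space with a chosen orthonormal basis indexed by a finType I is
   modelled as functions I -> C; operators as matrices I -> I -> C.
   Tensor products are indexed by product types. *)
From HB Require Import structures.
From mathcomp Require Import all_boot all_order all_algebra.
From mathcomp Require Import reals.
From mathcomp Require Import complex.
Set Implicit Arguments. Unset Strict Implicit. Unset Printing Implicit Defensive.
Import Order.TTheory GRing.Theory Num.Theory.
Local Open Scope ring_scope.

Section Defs.
Variable C : numClosedFieldType.

Definition vec (I : finType) := I -> C.
Definition op (I : finType) := I -> I -> C.

Definition opeq (I : finType) (X Y : op I) := forall i j, X i j = Y i j.
Definition veceq (I : finType) (u w : vec I) := forall i, u i = w i.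

Definition idop (I : finType) : op I := fun i j => (i == j)%:R.
Definition opmul (I : finType) (X Y : op I) : op I :=
  fun i k => \sum_j X i j * Y j k.
Definition adj (I : finType) (X : op I) : op I := fun i j => (X j i)^*.
Definition apply (I : finType) (X : op I) (v : vec I) : vec I :=
  fun i => \sum_j X i j * v j.
Definition outer (I : finType) (u w : vec I) : op I := fun i j => u i * (w j)^*.
Definition norm2 (I : finType) (v : vec I) : C := \sum_i `|v i| ^+ 2.

Definition unitary (I : finType) (U : op I) :=
  opeq (opmul (adj U) U) (@idop I) /\ opeq (opmul U (adj U)) (@idop I).
Definition subunitary (I : finType) (L : op I) :=
  forall v : vec I, norm2 (apply L v) <= norm2 v.
Definition psd (I : finType) (X : op I) :=
  forall v : vec I, 0 <= \sum_i \sum_j (v i)^* * X i j * v j.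

Definition kron (I J : finType) (u : vec I) (w : vec J) : vec (I * J)%type :=
  fun p => u p.1 * w p.2.
Definition kronop (I J : finType) (X : op I) (Y : op J) : op (I * J)%type :=
  fun p q => X p.1 q.1 * Y p.2 q.2.

Definition ptr2 (I J : finType) (X : op (I * J)%type) : op I :=
  fun i k => \sum_j X (i, j) (k, j).
Definition trBC (IA IB IC : finType) (X : op ((IA * IB) * IC)%type) : op IA :=
  fun a a' => \sum_b \sum_c X ((a, b), c) ((a', b), c).

Definition liftU (IA IB IC : finType) (U : op (IB * IC)%type)
  : op ((IA * IB) * IC)%type :=
  fun p q => (p.1.1 == q.1.1)%:R * U (p.1.2, p.2) (q.1.2, q.2).
Definition liftL (IA IB IC : finType) (L : op (IA * IB)%type)
  : op ((IA * IB) * IC)%type :=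
  fun p q => L p.1 q.1 * (p.2 == q.2)%:R.

Fixpoint Phi (IA IB IC : finType) (L : op (IA * IB)%type)
  (Us : nat -> op (IB * IC)%type) (x : vec ((IA * IB) * IC)%type) (j : nat)
  : vec ((IA * IB) * IC)%type :=
  match j with
  | 0 => apply (@liftU IA IB IC (Us 0%N)) x
  | j'.+1 => apply (@liftU IA IB IC (Us j)) (apply (@liftL IA IB IC L) (Phi L Us x j'))
  end.

Definition algorithm_constituted (IA IB IC' : finType) (L : op (IA * IB)%type)
  (T : nat) (pi : nat -> op (IA * IB)%type)
  (x y : vec ((IA * IB) * IC')%type) :=
  exists Us : nat -> op (IB * IC')%type,
    [/\ forall j, (j <= T)%N -> unitary (Us j),
        veceq (Phi L Us x T) y
      & forall j, (j < T)%N ->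
          opeq (ptr2 (outer (Phi L Us x j) (Phi L Us x j))) (pi j)].

Definition ket0 : vec 'I_2 := fun q => (q == ord0)%:R.
Definition ket1 : vec 'I_2 := fun q => (q == ord_max)%:R.

Definition attachq (IAB IC : finType) (u : vec (IAB * IC)%type) (q : vec 'I_2)
  : vec (IAB * (IC * 'I_2))%type :=
  fun p => u (p.1, p.2.1) * q p.2.2.

End Defs.

(* Main.v *)
Require Import Defs.
From HB Require Import structures.
From mathcomp Require Import all_boot all_order all_algebra.
From mathcomp Require Import reals.
From mathcomp Require Import complex.
From mathcomp Require Import spectral sesquilinear ring.
From Stdlib Require ClassicalEpsilon.
Set Implicit Arguments. Unset Strict Implicit. Unset Printing Implicit Defensive.
Import Order.TTheory GRing.Theory Num.Theory.
Local Open Scope ring_scope.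
Local Open Scope sesquilinear_scope.

Section Mx.
Variable C : numClosedFieldType.

Lemma sq_unitary p n (X : 'M[C]_(p, n)) : p = n -> X *m X^t* = 1%:M -> X^t* *m X = 1%:M.
Proof.
move=> e; subst p => XX.
have Xu : X \is unitarymx by apply/unitarymxP.
by rewrite -invmx_unitary // mulVmx // unitarymx_unit.
Qed.

Lemma trmxC_mul m n p (A : 'M[C]_(m, n)) (B : 'M[C]_(n, p)) :
  (A *m B)^t* = B^t* *m A^t*.
Proof. by rewrite trmx_mul map_mxM. Qed.

Lemma konc r p n (F G : 'M[C]_(r, n)) (PF PG : 'M[C]_(p, n)) :
  F *m F^t* = 1%:M -> G *m G^t* = 1%:M -> PF *m PF^t* = 1%:M -> PG *m PG^t* = 1%:M ->
  F *m PF^t* = 0 -> G *m PG^t* = 0 -> (r + p = n)%N ->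
  exists V : 'M[C]_n, [/\ V *m V^t* = 1%:M, V^t* *m V = 1%:M & F *m V = G].
Proof.
move=> FF GG PP QQ FP GQ rpn.
have hsq : F^t* *m F + PF^t* *m PF = 1%:M.
  have := @sq_unitary _ _ (col_mx F PF) rpn.
  rewrite tr_col_mx map_row_mx mul_row_col; apply.
  rewrite mul_col_row FF PP FP.
  idtac.
  have -> : PF *m F^t* = 0 by rewrite -[PF]trmxCK -trmxC_mul FP trmx0 map_mx0.
  by rewrite -scalar_mx_block.
have QG : PG *m G^t* = 0 by rewrite -[PG]trmxCK -trmxC_mul GQ trmx0 map_mx0.
set V := F^t* *m G + PF^t* *m PG.
have VV : V *m V^t* = 1%:M.
  rewrite /V linearD /= map_mxD !trmxC_mul !trmxCK.
  rewrite mulmxDl !mulmxDr !mulmxA -!(mulmxA _ G) -!(mulmxA _ PG) GG QQ GQ QG.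
  by rewrite !mulmx0 !mul0mx !mulmx1 addr0 add0r.
exists V; split => //.
  by apply: sq_unitary.
rewrite /V mulmxDr !mulmxA FF FP mul0mx addr0 mul1mx //.
Qed.
End Mx.
Section Mx2.
Variable C : numClosedFieldType.
Local Notation ortho B := (orthomx (@Num.Def.conjC C) (hermitian1mx _) B).

Lemma cast_unit p q n (e : p = q) (X : 'M[C]_(p, n)) :
  X *m X^t* = 1%:M -> castmx (e, erefl n) X *m (castmx (e, erefl n) X)^t* = 1%:M.
Proof. by subst q; rewrite castmx_id. Qed.

Lemma cast_orth r p q n (e : p = q) (G : 'M[C]_(r, n)) (X : 'M[C]_(p, n)) :
  G *m X^t* = 0 -> G *m (castmx (e, erefl n) X)^t* = 0.
Proof. by subst q; rewrite castmx_id. Qed.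

Lemma compl_props r n (F : 'M[C]_(r, n)) : F *m F^t* = 1%:M ->
  let P := schmidt (row_base (ortho F)) in
  [/\ P *m P^t* = 1%:M, F *m P^t* = 0 & (r + \rank (ortho F) = n)%N].
Proof.
move=> FF P; have Fu : F \is unitarymx by apply/unitarymxP.
split.
- by apply/unitarymxP; rewrite schmidt_unitarymx // rank_leq_col.
- apply/orthomx1P; rewrite orthomx_sym.
  by rewrite eqmx_schmidt_free ?row_base_free // eq_row_base.
- by rewrite -{1}(mxrank_unitary Fu) add_rank_ortho.
Qed.

Lemma kon r n (F G : 'M[C]_(r, n)) :
  F *m F^t* = 1%:M -> G *m G^t* = 1%:M ->
  exists V : 'M[C]_n, [/\ V *m V^t* = 1%:M, V^t* *m V = 1%:M & F *m V = G].
Proof.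
move=> FF GG.
have [P1 P2 P3] := compl_props FF.
have [Q1 Q2 Q3] := compl_props GG.
have e : \rank (ortho G) = \rank (ortho F).
  by apply/eqP; rewrite -(eqn_add2l r) P3 Q3.
apply: (konc FF GG P1 (cast_unit e Q1) P2 (cast_orth e Q2) P3).
Qed.
End Mx2.
Section Mx3.
Variable C : numClosedFieldType.

Lemma gram_entry m n (M : 'M[C]_(m, n)) i i' :
  (M *m M^t*) i i' = \sum_j M i j * (M i' j)^*.
Proof. by rewrite !mxE; apply: eq_bigr => j _; rewrite !mxE. Qed.

Lemma row_zero m n (M : 'M[C]_(m, n)) i :
  (M *m M^t*) i i = 0 -> forall j, M i j = 0.
Proof.
rewrite gram_entry => h j; apply/eqP; rewrite -mul_conjC_eq0; apply/eqP.
by apply: (psumr_eq0P _ h) => // k _; apply: mul_conjC_ge0.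
Qed.

Lemma gram_ge0 m n (M : 'M[C]_(m, n)) i : 0 <= (M *m M^t*) i i.
Proof. by rewrite gram_entry sumr_ge0 // => j _; apply: mul_conjC_ge0. Qed.

Lemma sqrtC_conj (x : C) : 0 <= x -> (sqrtC x)^* = sqrtC x.
Proof. by move=> h; rewrite geC0_conj // sqrtC_ge0. Qed.

Lemma sqrtC_mulC (x : C) : 0 <= x -> sqrtC x * (sqrtC x)^* = x.
Proof. by move=> h; rewrite sqrtC_conj // -expr2 sqrtCK. Qed.

Lemma kdiag m n (M N : 'M[C]_(m, n)) (d : 'rV[C]_m) :
  M *m M^t* = diag_mx d -> N *m N^t* = diag_mx d ->
  exists V : 'M[C]_n, [/\ V *m V^t* = 1%:M, V^t* *m V = 1%:M & M *m V = N].
Proof.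
move=> MM NN.
have dge0 i : 0 <= d 0 i.
  by have := gram_ge0 M i; rewrite MM mxE eqxx mulr1n.
pose S := [set i | d 0 i != 0].
pose FM := \matrix_(k < #|S|, j < n) (M (enum_val k) j / sqrtC (d 0 (enum_val k))).
pose FN := \matrix_(k < #|S|, j < n) (N (enum_val k) j / sqrtC (d 0 (enum_val k))).
have FU (X : 'M[C]_(m, n)) : X *m X^t* = diag_mx d ->
   (\matrix_(k < #|S|, j < n) (X (enum_val k) j / sqrtC (d 0 (enum_val k)))) *m
   (\matrix_(k < #|S|, j < n) (X (enum_val k) j / sqrtC (d 0 (enum_val k))))^t*
   = 1%:M.
  move=> XX; apply/matrixP => k k'; rewrite gram_entry.
  under eq_bigr => j _ do rewrite !mxE rmorphM /= fmorphV /= sqrtC_conj //.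
  under eq_bigr => j _ do rewrite mulrACA.
  rewrite -mulr_suml -gram_entry XX !mxE.
  have: enum_val k \in S := enum_valP k.
  rewrite inE => hk.
  case: (eqVneq k k') => [<-|kk]; first rewrite !eqxx mulr1n.
    by rewrite -invfM -expr2 sqrtCK mulfV.
  by rewrite (inj_eq enum_val_inj) (negPf kk) mulr0n mul0r.
have [V [V1 V2 V3]] := kon (FU _ MM) (FU _ NN).
exists V; split => //.
apply/matrixP => i j; rewrite !mxE.
case: (boolP (i \in S)) => iS.
  pose k := enum_rank_in iS i.
  have ek : enum_val k = i by rewrite /k enum_rankK_in.
  have hd : sqrtC (d 0 i) != 0 by rewrite sqrtC_eq0; have := iS; rewrite inE.
  have eM l : M i l = sqrtC (d 0 i) * (\matrix_(k < #|S|, j < n) (M (enum_val k) j / sqrtC (d 0 (enum_val k)))) k l.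
    by rewrite mxE ek mulrC divfK.
  have eN : N i j = sqrtC (d 0 i) * (\matrix_(k < #|S|, j < n) (N (enum_val k) j / sqrtC (d 0 (enum_val k)))) k j.
    by rewrite mxE ek mulrC divfK.
  rewrite eN -V3 mxE mulr_sumr; apply: eq_bigr => l _.
  by rewrite eM mulrA.
have d0 : d 0 i = 0 by move: iS; rewrite inE negbK => /eqP.
have Mi := row_zero (i:=i) (M:=M); have Ni := row_zero (i:=i) (M:=N).
rewrite MM NN mxE eqxx mulr1n d0 in Mi Ni.
rewrite Ni //; apply: big1 => l _; by rewrite Mi // mul0r.
Qed.
End Mx3.
Section Mx4.
Variable C : numClosedFieldType.

Lemma spec_gram m k (M : 'M[C]_(m, k)) :
  let P := spectralmx (M *m M^t*) in
  [/\ P *m P^t* = 1%:M, P^t* *m P = 1%:M &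
      (P *m M) *m (P *m M)^t* = diag_mx (spectral_diag (M *m M^t*))].
Proof.
move=> P.
have Pu : P \is unitarymx by apply: spectral_unitarymx.
have PP : P *m P^t* = 1%:M by apply/unitarymxP.
have PP' : P^t* *m P = 1%:M by apply: sq_unitary.
have hn : M *m M^t* \is normalmx.
  apply/normalmxP; suff -> : (M *m M^t*)^t* = M *m M^t* by [].
  by rewrite trmxC_mul trmxCK.
have := orthomx_spectralP hn; rewrite -/P invmx_unitary // => hQ.
split => //.
set D := diag_mx _ in hQ *.
rewrite trmxC_mul !mulmxA -(mulmxA P) hQ !mulmxA PP mul1mx -mulmxA PP mulmx1 //.
Qed.

Lemma kgram m n (M N : 'M[C]_(m, n)) :
  M *m M^t* = N *m N^t* ->
  exists V : 'M[C]_n, [/\ V *m V^t* = 1%:M, V^t* *m V = 1%:M & M *m V = N].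
Proof.
move=> MN.
have [P1 P2 P3] := spec_gram M.
have [Q1 Q2 Q3] := spec_gram N.
rewrite -MN in Q1 Q2 Q3.
have [V [V1 V2 V3]] := kdiag P3 Q3.
exists V; split => //.
by rewrite -[M]mul1mx -P2 -!mulmxA (mulmxA _ M) V3 mulmxA P2 mul1mx.
Qed.

Lemma cast_gram m q n (e : q = n) (X : 'M[C]_(m, q)) :
  castmx (erefl m, e) X *m (castmx (erefl m, e) X)^t* = X *m X^t*.
Proof. by subst n; rewrite castmx_id. Qed.

Lemma compress m k n (G : 'M[C]_(m, k)) : (m <= n)%N ->
  exists H : 'M[C]_(m, n), H *m H^t* = G *m G^t*.
Proof.
move=> mn.
have [P1 P2 P3] := spec_gram G.
set P := spectralmx _ in P1 P2 P3; set d := spectral_diag _ in P3.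
have dge0 i : 0 <= d 0 i.
  by have := gram_ge0 (P *m G) i; rewrite P3 mxE eqxx mulr1n.
pose H0 := P^t* *m diag_mx (map_mx sqrtC d).
have H0H : H0 *m H0^t* = G *m G^t*.
  have GG : G *m G^t* = P^t* *m diag_mx d *m P.
    by rewrite -P3 trmxC_mul !mulmxA P2 mul1mx -mulmxA P2 mulmx1.
  rewrite /H0 !trmxC_mul trmxCK !mulmxA GG -(mulmxA (P^t*)); congr (_ *m _ *m _).
  apply/matrixP => i j; rewrite mul_diag_mx !mxE.
  case: (eqVneq i j) => [<-|ij].
    by rewrite ?eqxx ?mulr1n sqrtC_mulC.
  by rewrite ?(negPf ij) ?mulr0n ?rmorph0 ?mulr0 ?mxE ?(negPf ij) ?mulr0n.
exists (castmx (erefl m, subnKC mn) (row_mx H0 (0 : 'M[C]_(m, n - m)))).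
rewrite cast_gram tr_row_mx map_col_mx mul_row_col H0H.
by rewrite trmx0 map_mx0 mulmx0 addr0.
Qed.
End Mx4.
Section Fun.
Variable C : numClosedFieldType.

Lemma sum_er (K : finType) (F : 'I_#|K| -> C) :
  \sum_(k : K) F (enum_rank k) = \sum_j F j.
Proof. by rewrite (reindex enum_rank) //; apply: onW_bij; apply: enum_rank_bij. Qed.

Definition mxof (A K : finType) (u : A -> K -> C) : 'M[C]_(#|A|, #|K|) :=
  \matrix_(i, j) u (enum_val i) (enum_val j).

Lemma gram_mxof (A K : finType) (u : A -> K -> C) a a' :
  (mxof u *m (mxof u)^t*) (enum_rank a) (enum_rank a') = \sum_k u a k * (u a' k)^*.
Proof.
rewrite gram_entry -sum_er; apply: eq_bigr => k _.
by rewrite !mxE !enum_rankK.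
Qed.

Lemma FL1 (A K : finType) (u w : A -> K -> C) :
  (forall a a', \sum_k u a k * (u a' k)^* = \sum_k w a k * (w a' k)^*) ->
  exists U : K -> K -> C,
    [/\ forall k k', \sum_l (U l k)^* * U l k' = (k == k')%:R,
        forall k k', \sum_l U k l * (U k' l)^* = (k == k')%:R &
        forall a k, \sum_l U k l * u a l = w a k].
Proof.
move=> h.
have: mxof u *m (mxof u)^t* = mxof w *m (mxof w)^t*.
  apply/matrixP => i i'.
  by rewrite -(enum_valK i) -(enum_valK i') !gram_mxof.
move=> /kgram [V [V1 V2 V3]].
exists (fun k k' => V (enum_rank k') (enum_rank k)); split.
- move=> k k'.
  have /matrixP/(_ (enum_rank k') (enum_rank k)) := V1.
  rewrite gram_entry -sum_er mxE (inj_eq enum_rank_inj) eq_sym => <-.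
  by apply: eq_bigr => l _; rewrite mulrC.
- move=> k k'.
  have /matrixP/(_ (enum_rank k) (enum_rank k'))/(congr1 Num.conj) := V2.
  rewrite [in RHS]mxE (inj_eq enum_rank_inj) rmorph_nat => <-.
  rewrite mxE rmorph_sum -sum_er; apply: eq_bigr => l _.
  by rewrite !mxE rmorphM /= conjCK mulrC.
- move=> a k.
  have /matrixP/(_ (enum_rank a) (enum_rank k)) := V3.
  rewrite !mxE !enum_rankK => <-.
  rewrite -sum_er; apply: eq_bigr => l _.
  by rewrite /mxof mxE !enum_rankK mulrC.
Qed.

Lemma FL2 (A K K2 : finType) (g : A -> K -> C) : (#|A| <= #|K2|)%N ->
  exists h : A -> K2 -> C,
    forall a a', \sum_k g a k * (g a' k)^* = \sum_k h a k * (h a' k)^*.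
Proof.
move=> le; have [H HH] := compress (mxof g) le.
exists (fun a k => H (enum_rank a) (enum_rank k)) => a a'.
rewrite -gram_mxof -HH gram_entry -sum_er //.
Qed.
End Fun.

Section Gen.
Variable C : numClosedFieldType.

Lemma sum_pair (I J : finType) (F : I * J -> C) :
  \sum_p F p = \sum_i \sum_j F (i, j).
Proof. by rewrite pair_bigA; apply: eq_bigr => -[]. Qed.

Lemma sum_delta (I : finType) (c : I) (f : I -> C) :
  \sum_c' (c == c')%:R * f c' = f c.
Proof.
rewrite (bigD1 c) //= eqxx mul1r big1 ?addr0 // => c' /negPf.
by rewrite eq_sym => ->; rewrite mul0r.
Qed.

Lemma sum_delta_r (I : finType) (c : I) (f : I -> C) :
  \sum_c' f c' * (c' == c)%:R = f c.
Proof.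
rewrite -[RHS](sum_delta c); apply: eq_bigr => c' _.
by rewrite mulrC eq_sym.
Qed.

Lemma psd_ptr2 (I J : finType) (u : vec C (I * J)%type) : psd (ptr2 (outer u u)).
Proof.
move=> v.
have -> : \sum_i \sum_j (v i)^* * ptr2 (outer u u) i j * v j =
   \sum_c (\sum_i (v i)^* * u (i, c)) * (\sum_i (v i)^* * u (i, c))^*.
  under eq_bigr => i _ do under eq_bigr => j _ do
    rewrite /ptr2 /outer mulr_sumr mulr_suml.
  under eq_bigr => i _ do rewrite exchange_big /=.
  rewrite exchange_big /=; apply: eq_bigr => c _.
  rewrite rmorph_sum mulr_suml; apply: eq_bigr => i _.
  rewrite mulr_sumr; apply: eq_bigr => j _.
  by rewrite rmorphM /= conjCK; ring.
by apply: sumr_ge0 => c _; apply: mul_conjC_ge0.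
Qed.

Lemma psd_ext (I : finType) (X Y : op C I) : opeq X Y -> psd X -> psd Y.
Proof.
move=> e h v; have := h v.
by under eq_bigr => i _ do under eq_bigr => j _ do rewrite e.
Qed.

Lemma applyL (I J : finType) (L : op C I) (u : vec C (I * J)%type) p c :
  apply (fun p q => L p.1 q.1 * (p.2 == q.2)%:R) u (p, c) = \sum_q L p q * u (q, c).
Proof.
rewrite /apply sum_pair; apply: eq_bigr => q _.
rewrite -(sum_delta c (fun c2 => L p q * u (q, c2))); apply: eq_bigr => c2 _ /=; ring.
Qed.

Lemma ptr2_liftL (I J : finType) (L : op C I) (u : vec C (I * J)%type) :
  let Lu := apply (fun p q => L p.1 q.1 * (p.2 == q.2)%:R) u in
  opeq (ptr2 (outer Lu Lu)) (opmul (opmul L (ptr2 (outer u u))) (adj L)).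
Proof.
move=> Lu p p'; rewrite /ptr2 /outer /opmul /adj /Lu.
under eq_bigr => c _ do rewrite !applyL rmorph_sum mulr_suml.
under eq_bigr => c _ do under eq_bigr => q _ do rewrite mulr_sumr.
under [RHS]eq_bigr => s _ do rewrite mulr_suml.
rewrite [RHS]exchange_big /=.
rewrite exchange_big /=; apply: eq_bigr => q _.
rewrite exchange_big /=; apply: eq_bigr => s _.
rewrite mulr_sumr mulr_suml; apply: eq_bigr => c _.
by rewrite rmorphM /=; ring.
Qed.

Lemma Lidle (IA IB : finType) (L : op C (IA * IB)%type) (idle : vec C IB)
  (hLidle : forall phi : vec C IA, veceq (apply L (kron phi idle)) (kron phi idle))
  (Z : op C IA) :
  opeq (opmul (opmul L (kronop Z (outer idle idle))) (adj L)) (kronop Z (outer idle idle)).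
Proof.
have s1 p s : opmul L (kronop Z (outer idle idle)) p s = Z p.1 s.1 * (idle p.2 * (idle s.2)^*).
  have := hLidle (fun a => Z a s.1) p; rewrite /apply /kron => h.
  rewrite /opmul /kronop /outer.
  transitivity ((\sum_q L p q * (Z q.1 s.1 * idle q.2)) * (idle s.2)^*).
    by rewrite mulr_suml; apply: eq_bigr => q _; ring.
  by rewrite h; ring.
move=> p q; rewrite {1}/opmul.
under eq_bigr => s _ do rewrite s1.
have := hLidle (fun a => (Z p.1 a)^*) q; rewrite /apply /kron => h.
transitivity (idle p.2 * (\sum_s L q s * ((Z p.1 s.1)^* * idle s.2))^*).
  rewrite rmorph_sum mulr_sumr; apply: eq_bigr => s _.
  by rewrite /adj !rmorphM /= conjCK; ring.
by rewrite h /kronop /outer rmorphM /= conjCK; ring.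
Qed.

Lemma LXL_lin (I : finType) (L X Y : op C I) (t : C) p q :
  opmul (opmul L (fun p q => X p q + Y p q / t)) (adj L) p q =
  opmul (opmul L X) (adj L) p q + opmul (opmul L Y) (adj L) p q / t.
Proof.
rewrite /opmul !mulr_suml -big_split /=; apply: eq_bigr => s _.
rewrite !mulr_suml -big_split /=; apply: eq_bigr => r _; ring.
Qed.

Lemma shape (I J : finType) (z v : vec C (I * J)%type) (s : C) p q :
  let f := fun p : (I * (J * 'I_2))%type => attachq z (@ket0 C) p + s * attachq v (@ket1 C) p in
  ptr2 (outer f f) p q = ptr2 (outer z z) p q + s * s^* * ptr2 (outer v v) p q.
Proof.
move=> f; rewrite /ptr2 sum_pair mulr_sumr -big_split /=; apply: eq_bigr => c _.
rewrite big_ord_recr big_ord1 /= /outer /f /attachq /ket0 /ket1 /=.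
rewrite rmorphD !rmorphM /= !rmorph_nat /=; ring.
Qed.

End Gen.

Lemma choice_nat (X : Type) (P : nat -> X -> Prop) :
  (forall j, exists x, P j x) -> exists f : nat -> X, forall j, P j (f j).
Proof.
move=> h.
exists (fun j => proj1_sig (ClassicalEpsilon.constructive_indefinite_description _ (h j))).
by move=> j; case: (ClassicalEpsilon.constructive_indefinite_description _ (h j)).
Qed.

Section Gen2.
Variable C : numClosedFieldType.

Lemma applyU (IA IB IC : finType) (U : op C (IB * IC)%type) (u : vec C ((IA * IB) * IC)%type) a b c :
  apply (@liftU C IA IB IC U) u ((a, b), c) = \sum_l U (b, c) l * u ((a, l.1), l.2).
Proof.
rewrite /apply /liftU sum_pair sum_pair /=.
rewrite -(sum_delta a (fun a2 => \sum_l U (b, c) l * u ((a2, l.1), l.2))).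
apply: eq_bigr => a2 _; rewrite sum_pair mulr_sumr; apply: eq_bigr => b2 _.
rewrite mulr_sumr; apply: eq_bigr => c2 _ /=; ring.
Qed.

Lemma apply_ext (I : finType) (X : op C I) (u u' : vec C I) p :
  (forall p, u p = u' p) -> apply X u p = apply X u' p.
Proof. by move=> e; apply: eq_bigr => q _; rewrite e. Qed.

Lemma ptr2_outer_ext (I J : finType) (u u' : vec C (I * J)%type) p q :
  (forall p, u p = u' p) -> ptr2 (outer u u) p q = ptr2 (outer u' u') p q.
Proof. by move=> e; apply: eq_bigr => c _; rewrite /outer !e. Qed.

Lemma LXL_ext (I : finType) (L X Y : op C I) :
  opeq X Y -> opeq (opmul (opmul L X) (adj L)) (opmul (opmul L Y) (adj L)).
Proof.
move=> e p q; apply: eq_bigr => s _; congr (_ * _).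
by apply: eq_bigr => r _; rewrite e.
Qed.

Lemma gram_trBC (IA IB IC : finType) (u : vec C ((IA * IB) * IC)%type) a a' :
  \sum_(k : (IB * IC)%type) u ((a, k.1), k.2) * (u ((a', k.1), k.2))^* = trBC (outer u u) a a'.
Proof. by rewrite sum_pair. Qed.

End Gen2.

Theorem proposition2 (R : realType) (IA IB IC : finType)
    (hdim : (#|IA| * #|IB| <= #|IC|)%N)
    (idle : vec R[i] IB) (hidle : norm2 idle = 1)
    (L : op R[i] (IA * IB)%type) (hL : subunitary L)
    (hLidle : forall phi : vec R[i] IA,
        veceq (apply L (kron phi idle)) (kron phi idle))
    (xi tau : vec R[i] ((IA * IB) * IC)%type) (hxi : exists p, xi p != 0)
    (pibar : op R[i] (IA * IB)%type) (hpibar : psd pibar)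
    (hbal : opeq
       (ptr2 (fun p q => opmul (opmul L pibar) (adj L) p q - pibar p q))
       (trBC (fun p q => outer tau tau p q - outer xi xi p q)))
    (v : vec R[i] ((IA * IB) * IC)%type)
    (hv : opeq (ptr2 (outer v v)) pibar) :
  forall T : nat, (0 < T)%N ->
  let pi : nat -> op R[i] (IA * IB)%type := fun j p q =>
      kronop (fun a a' => ((T - j)%:R / T%:R) * trBC (outer xi xi) a a'
                          + (j%:R / T%:R) * trBC (outer tau tau) a a')
             (outer idle idle) p q
      + pibar p q / T%:R in
  [/\ (forall j, (j < T)%N -> psd (pi j)),
      (forall j, (j.+1 < T)%N ->
         opeq (ptr2 (pi j.+1)) (ptr2 (opmul (opmul L (pi j)) (adj L))))
    & algorithm_constituted L T pi
        (fun p : ((IA * IB) * (IC * 'I_2))%type => attachq xi (@ket0 R[i]) p + (sqrtC T%:R)^-1 * attachq v (@ket1 R[i]) p)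
        (fun p : ((IA * IB) * (IC * 'I_2))%type => attachq tau (@ket0 R[i]) p + (sqrtC T%:R)^-1 * attachq v (@ket1 R[i]) p)].
Proof.
move=> T hT pi.
have Tn0 : (T%:R : R[i]) != 0 by rewrite pnatr_eq0 -lt0n.
set s := (sqrtC T%:R)^-1.
have hs : s * s^* = T%:R^-1.
  by rewrite /s fmorphV /= sqrtC_conj ?ler0n // -invfM -expr2 sqrtCK.
pose rx := trBC (outer xi xi); pose rt := trBC (outer tau tau).
pose Z (j : nat) := fun a a' => (T - j)%:R / T%:R * rx a a' + j%:R / T%:R * rt a a'.
have hpi j p q : pi j p q = Z j p.1 q.1 * (idle p.2 * (idle q.2)^*) + pibar p q / T%:R by [].
have nidle : \sum_b idle b * (idle b)^* = 1.
  by rewrite -hidle /norm2; apply: eq_bigr => b _; rewrite normCK.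
have ptr2pi j a a' : ptr2 (pi j) a a' = Z j a a' + ptr2 pibar a a' / T%:R.
  rewrite /ptr2; under eq_bigr => b _ do rewrite hpi.
  by rewrite big_split /= -mulr_sumr nidle mulr1 -mulr_suml.
have Zstep j : (j < T)%N -> forall a a', Z j.+1 a a' = Z j a a' + (rt a a' - rx a a') / T%:R.
  move=> jT a a'; rewrite /Z !natrB // ?(ltnW jT) // -addn1 natrD; ring.
have part2 j : (j < T)%N -> forall a a',
    ptr2 (opmul (opmul L (pi j)) (adj L)) a a' = ptr2 (pi j.+1) a a'.
  move=> jT a a'.
  have e p q : opmul (opmul L (pi j)) (adj L) p q =
      kronop (Z j) (outer idle idle) p q + opmul (opmul L pibar) (adj L) p q / T%:R.
    by rewrite -(Lidle hLidle (Z j) p q) -LXL_lin.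
  rewrite /ptr2; under eq_bigr => b _ do rewrite e.
  rewrite big_split /= -mulr_suml.
  have hb := hbal a a'; rewrite /ptr2 /trBC in hb.
  have hLP : \sum_b opmul (opmul L pibar) (adj L) (a, b) (a', b) = ptr2 pibar a a' + (rt a a' - rx a a').
    rewrite sumrB in hb; rewrite [X in X = _](_ : _ = (\sum_b opmul (opmul L pibar) (adj L) (a, b) (a', b) - ptr2 pibar a a') + ptr2 pibar a a'); last by rewrite subrK.
    rewrite hb addrC; congr (_ + _).
    rewrite /rt /rx /trBC -sumrB; apply: eq_bigr => b _; by rewrite -sumrB.
  rewrite hLP -/(ptr2 (pi j.+1) a a') ptr2pi Zstep // /kronop /outer /= -mulr_sumr nidle mulr1; ring.
have hA : (#|IA| <= #|IC|)%N.
  apply: leq_trans hdim; apply: leq_pmulr.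
  rewrite lt0n; apply/negP => /eqP /card0_eq h0.
  move: hidle; rewrite /norm2 big_pred0 // => /eqP; rewrite eq_sym oner_eq0.
  by [].
have hw : forall j, exists h : IA -> IC -> R[i], forall a a', Z j a a' = \sum_c h a c * (h a' c)^*.
  move=> j.
  have [h hh] := @FL2 _ IA ((IB * IC) * bool)%type IC
    (fun a k => if k.2 then sqrtC ((T - j)%:R / T%:R) * xi ((a, k.1.1), k.1.2)
                else sqrtC (j%:R / T%:R) * tau ((a, k.1.1), k.1.2)) hA.
  exists h => a a'; rewrite -hh sum_pair.
  under eq_bigr => bc _ do rewrite big_bool /=.
  rewrite big_split /= /Z /rx /rt /trBC /outer sum_pair mulr_sumr; congr (_ + _).
    apply: eq_bigr => b _; rewrite mulr_sumr; apply: eq_bigr => c _.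
    by rewrite rmorphM /= [RHS]mulrACA sqrtC_mulC // divr_ge0 // ler0n.
  rewrite sum_pair mulr_sumr; apply: eq_bigr => b _; rewrite mulr_sumr; apply: eq_bigr => c _.
  by rewrite rmorphM /= [RHS]mulrACA sqrtC_mulC // divr_ge0 // ler0n.
have [w hw'] := choice_nat hw.
pose z j : vec R[i] ((IA * IB) * IC)%type := fun p => w j p.1.1 p.2 * idle p.1.2.
pose Phi_ j := fun p : ((IA * IB) * (IC * 'I_2))%type =>
  attachq (z j) (@ket0 R[i]) p + s * attachq v (@ket1 R[i]) p.
have P1 j : opeq (ptr2 (outer (Phi_ j) (Phi_ j))) (pi j).
  move=> p q; rewrite shape hs hpi hv.
  rewrite /ptr2 /outer /z hw' mulr_suml; congr (_ + _); last by rewrite mulrC.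
  by apply: eq_bigr => c _; rewrite rmorphM /=; ring.
pose x := fun p : ((IA * IB) * (IC * 'I_2))%type =>
  attachq xi (@ket0 R[i]) p + (sqrtC T%:R)^-1 * attachq v (@ket1 R[i]) p.
pose y := fun p : ((IA * IB) * (IC * 'I_2))%type =>
  attachq tau (@ket0 R[i]) p + (sqrtC T%:R)^-1 * attachq v (@ket1 R[i]) p.
pose src j := if j is j'.+1 then apply (@liftL _ IA IB (IC * 'I_2)%type L) (Phi_ j') else x.
pose tgt j := if j == T then y else Phi_ j.
have trshape (u : vec R[i] ((IA * IB) * IC)%type) a a' :
    trBC (outer (fun p : ((IA * IB) * (IC * 'I_2))%type =>
      attachq u (@ket0 R[i]) p + s * attachq v (@ket1 R[i]) p)
      (fun p : ((IA * IB) * (IC * 'I_2))%type =>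
      attachq u (@ket0 R[i]) p + s * attachq v (@ket1 R[i]) p)) a a'
    = trBC (outer u u) a a' + ptr2 pibar a a' / T%:R.
  rewrite [LHS](_ : _ = \sum_b ptr2 (outer (fun p : ((IA * IB) * (IC * 'I_2))%type =>
      attachq u (@ket0 R[i]) p + s * attachq v (@ket1 R[i]) p)
      (fun p : ((IA * IB) * (IC * 'I_2))%type =>
      attachq u (@ket0 R[i]) p + s * attachq v (@ket1 R[i]) p)) (a, b) (a', b)) //.
  under eq_bigr => b _ do rewrite shape hs hv.
  by rewrite big_split /= -mulr_sumr mulrC.
have gsrc j : (j <= T)%N -> forall a a', trBC (outer (src j) (src j)) a a' = ptr2 (pi j) a a'.
  case: j => [|j] hj a a'.
    by rewrite /src trshape ptr2pi /Z subn0 divff // !mul0r mul1r addr0.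
  rewrite /src [LHS](_ : _ = \sum_b ptr2 (outer (apply (@liftL _ IA IB (IC * 'I_2)%type L) (Phi_ j))
     (apply (@liftL _ IA IB (IC * 'I_2)%type L) (Phi_ j))) (a, b) (a', b)) //.
  under eq_bigr => b _ do rewrite (ptr2_liftL L (Phi_ j)) (LXL_ext L (P1 j)).
  exact: part2.
have gtgt j : (j <= T)%N -> forall a a', trBC (outer (tgt j) (tgt j)) a a' = ptr2 (pi j) a a'.
  move=> hj a a'; rewrite /tgt; case: eqP => [->|_].
    by rewrite trshape ptr2pi /Z subnn divff // !mul0r mul1r add0r.
  rewrite [LHS](_ : _ = \sum_b ptr2 (outer (Phi_ j) (Phi_ j)) (a, b) (a', b)) //.
  by apply: eq_bigr => b _; rewrite P1.
have hU : forall j, exists U : op R[i] (IB * (IC * 'I_2))%type, (j <= T)%N ->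
    unitary U /\ forall p, apply (@liftU _ IA IB (IC * 'I_2)%type U) (src j) p = tgt j p.
  move=> j; case: (leqP j T) => hj; last by exists (fun _ _ => 0).
  have [U [U1 U2 U3]] := @FL1 _ IA (IB * (IC * 'I_2))%type
      (fun a k => src j ((a, k.1), k.2)) (fun a k => tgt j ((a, k.1), k.2))
      (fun a a' => etrans (gram_trBC _ _ _) (etrans (gsrc j hj a a')
                   (esym (etrans (gram_trBC _ _ _) (gtgt j hj a a'))))).
  exists U => _; split; first by split => k k'; [exact: U1 | exact: U2].
  by move=> [[a b] c]; rewrite applyU; exact: (U3 a (b, c)).
have [Us hUs] := choice_nat hU.
have key : forall j, (j <= T)%N -> forall p, Phi L Us x j p = tgt j p.
  elim => [|j IH] hj p.
    rewrite -((hUs 0%N hj).2 p).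
    rewrite /=; reflexivity.
  rewrite /= -((hUs j.+1 hj).2 p) /src.
  apply: apply_ext => q; apply: apply_ext => r.
  have := IH (ltnW hj) r.
  by rewrite /tgt (ltn_eqF hj).
split.
- by move=> j hj; apply: (psd_ext (P1 j)); apply: psd_ptr2.
- by move=> j hj a a'; rewrite part2 // ltnW.
exists Us; split.
- by move=> j hj; exact: (hUs j hj).1.
- by move=> p; rewrite key // /tgt eqxx.
move=> j hj p q.
rewrite (@ptr2_outer_ext _ _ _ _ (tgt j) p q (key j (ltnW hj))) /tgt (ltn_eqF hj).
exact: P1.
Qed.
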